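(* If a quadrilateral $q$ is $\frac{\pi}{12}$-near square and has two adjacent acute angles, then $q$ has a periodic billiard path.
   Context: A quadrilateral is cut by a diagonal into two triangles. Its parameters $(a_1,a_2,a_3,a_4)$ are the four angles that the diagonal makes with the four sides (the angles of the two triangles at the endpoints of the diagonal). For $\varepsilon>0$, the quadrilateral is $\varepsilon$-near square if $|a_i-\pi/4|<\varepsilon$ for all $i$. A billiard path is a straight-line trajectory inside the polygon that reflects off the sides with angle of incidence equal to angle of reflection. Trajectories hitting vertices are excluded. It is periodic if it repeats itself. *)

(* Defs.v *)
From Stdlib Require Import Reals Lra.
Open Scope R_scope.

Definition point : Type := (R * R)%type.

Definition vsub (p q : point) : point := (fst p - fst q, snd p - snd q).
Definition vdot (u v : point) : R := fst u * fst v + snd u * snd v.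
Definition vcross (u v : point) : R := fst u * snd v - snd u * fst v.
Definition vnorm (u : point) : R := sqrt (vdot u u).
Definition vscale (c : R) (u : point) : point := (c * fst u, c * snd u).

Definition angle (P Q S : point) : R :=
  acos (vdot (vsub P Q) (vsub S Q) / (vnorm (vsub P Q) * vnorm (vsub S Q))).

(** A quadrilateral ABCD cut by the diagonal AC into the two nondegenerate
    triangles ABC and ACD: B and D lie strictly on opposite sides of line AC. *)
Definition diag_quadrilateral (A B C D : point) : Prop :=
  vcross (vsub C A) (vsub B A) * vcross (vsub C A) (vsub D A) < 0.

(** The parameters (a1,a2,a3,a4): angles of the triangles ABC, ACD at the
    endpoints A, C of the diagonal, i.e. the angles between AC and the sides. *)
Definition a1 (A B C D : point) : R := angle B A C.
Definition a2 (A B C D : point) : R := angle A C B.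
Definition a3 (A B C D : point) : R := angle A C D.
Definition a4 (A B C D : point) : R := angle C A D.

Definition near_square (eps : R) (A B C D : point) : Prop :=
  Rabs (a1 A B C D - PI/4) < eps /\ Rabs (a2 A B C D - PI/4) < eps /\
  Rabs (a3 A B C D - PI/4) < eps /\ Rabs (a4 A B C D - PI/4) < eps.

(** Vertices V_0 = A, V_1 = B, V_2 = C, V_3 = D (indices mod 4);
    side i is the segment [V_i, V_{i+1}]. *)
Definition vert (A B C D : point) (i : nat) : point :=
  match Nat.modulo i 4 with
  | 0%nat => A | 1%nat => B | 2%nat => C | _ => D
  end.

Definition interior_angle (A B C D : point) (i : nat) : R :=
  angle (vert A B C D (i + 3)) (vert A B C D i) (vert A B C D (i + 1)).

Definition two_adjacent_acute (A B C D : point) : Prop :=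
  exists i : nat, (i < 4)%nat /\
    interior_angle A B C D i < PI/2 /\ interior_angle A B C D (i + 1) < PI/2.

Definition on_open_side (A B C D : point) (i : nat) (p : point) : Prop :=
  exists t : R, 0 < t < 1 /\
    p = (fst (vert A B C D i) + t * (fst (vert A B C D (i+1)) - fst (vert A B C D i)),
         snd (vert A B C D i) + t * (snd (vert A B C D (i+1)) - snd (vert A B C D i))).

Definition reflect (u d : point) : point :=
  vsub (vscale (2 * vdot d u / vdot u u) u) d.

(** A periodic billiard path: a cyclic sequence of n bounce points p j on
    the open sides k j (never at a vertex), consecutive bounces on different
    sides (so each chord is a straight segment through the convex interior),
    satisfying the law of reflection at each bounce: the outgoing direction
    is a positive multiple of the mirror image of the incoming direction in
    the side. *)
Definition periodic_billiard_path (A B C D : point) : Prop :=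
  exists (n : nat) (p : nat -> point) (k : nat -> nat),
    (0 < n)%nat /\
    (forall j, p (j + n)%nat = p j /\ k (j + n)%nat = k j) /\
    (forall j, (k j < 4)%nat /\ on_open_side A B C D (k j) (p j)) /\
    (forall j, k (S j) <> k j) /\
    (forall j, exists lam : R, 0 < lam /\
       vsub (p (S (S j))) (p (S j)) =
       vscale lam (reflect (vsub (vert A B C D (k (S j) + 1)) (vert A B C D (k (S j))))
                           (vsub (p (S j)) (p j)))).

(* Main.v *)
Require Import Defs.
From Stdlib Require Import Reals Lra Psatz Arith Lia.
Open Scope R_scope.


Lemma refl_lemma (u d e : point) :
  vcross d u * vcross e u < 0 ->
  vdot d u * vcross e u + vdot e u * vcross d u = 0 ->
  exists l, 0 < l /\ e = vscale l (reflect u d).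
Proof.
  destruct u as [u1 u2], d as [d1 d2], e as [e1 e2].
  unfold vcross, vdot, reflect, vscale, vsub; simpl. intros H1 H2.
  assert (Hd : d1 * u2 - d2 * u1 <> 0) by (intro Z; rewrite Z in H1; lra).
  assert (Hu : u1 * u1 + u2 * u2 <> 0).
  { intro Z. assert (u1 = 0) by nra. assert (u2 = 0) by nra. subst. lra. }
  exists (- (e1 * u2 - e2 * u1) / (d1 * u2 - d2 * u1)). split.
  - assert (0 < (d1 * u2 - d2 * u1)^2) by nra.
    replace (- (e1 * u2 - e2 * u1) / (d1 * u2 - d2 * u1)) with
      (- ((e1 * u2 - e2 * u1) * (d1 * u2 - d2 * u1)) / (d1 * u2 - d2 * u1)^2) by (field; auto).
    apply Rdiv_lt_0_compat; nra.
  - f_equal; apply Rminus_diag_uniq; unfold vdot; simpl.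
    + match goal with |- ?L = 0 => replace L with
        (u1 * ((d1 * u1 + d2 * u2) * (e1 * u2 - e2 * u1) + (e1 * u1 + e2 * u2) * (d1 * u2 - d2 * u1)) / ((d1 * u2 - d2 * u1) * (u1 * u1 + u2 * u2))) by (field; auto) end.
      rewrite H2. field. auto.
    + match goal with |- ?L = 0 => replace L with
        (u2 * ((d1 * u1 + d2 * u2) * (e1 * u2 - e2 * u1) + (e1 * u1 + e2 * u2) * (d1 * u2 - d2 * u1)) / ((d1 * u2 - d2 * u1) * (u1 * u1 + u2 * u2))) by (field; auto) end.
      rewrite H2. field. auto.
Qed.
Lemma div_neg (n d : R) : n < 0 -> 0 < d -> n / d < 0.
Proof. intros. unfold Rdiv. assert (0 < / d) by (apply Rinv_0_lt_compat; auto). nra. Qed.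

Lemma core_signs (x1 x2 a1 a2 u1 u2 v1 v2 : R) :
  let A1 := -(a1*u1+a2*u2) in let A2 := -(a1*v1+a2*v2) in
  let K1 := u1*a2 - u2*a1 in let K2 := a1*v2 - a2*v1 in
  let N := A1*K2 + A2*K1 in
  let aa := a1*a1+a2*a2 in let uu := u1*u1+u2*u2 in let vv := v1*v1+v2*v2 in
  0 < A1 -> 0 < A2 -> 0 < K1*K2 -> A1*A2 < K1*K2 -> A1 < uu -> A2 < vv ->
  let p := A1*K2/N in let q := A2/vv in let t := (uu - A1)/uu in
  let P := (x1 + p*a1, x2 + p*a2) in let Q := (x1 + a1 + q*v1, x2 + a2 + q*v2) in
  let R := (x1 - u1 + t*u1, x2 - u2 + t*u2) in
  0 < p < 1 /\ 0 < q < 1 /\ 0 < t < 1 /\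
  vcross (vsub Q P) (v1,v2) * vcross (vsub R Q) (v1,v2) < 0 /\
  vdot (vsub Q P) (v1,v2) * vcross (vsub R Q) (v1,v2) + vdot (vsub R Q) (v1,v2) * vcross (vsub Q P) (v1,v2) = 0 /\
  vcross (vsub R Q) (u1,u2) * vcross (vsub P R) (u1,u2) < 0 /\
  vdot (vsub R Q) (u1,u2) * vcross (vsub P R) (u1,u2) + vdot (vsub P R) (u1,u2) * vcross (vsub R Q) (u1,u2) = 0 /\
  vcross (vsub P R) (a1,a2) * vcross (vsub Q P) (a1,a2) < 0 /\
  vdot (vsub P R) (a1,a2) * vcross (vsub Q P) (a1,a2) + vdot (vsub Q P) (a1,a2) * vcross (vsub P R) (a1,a2) = 0.
Proof.
  intros A1 A2 K1 K2 N aa uu vv HA1 HA2 HK HAK Hu Hv p q t P Q R.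
  assert (HNK : 0 < N * K2).
  { unfold N. assert (0 < K2*K2) by nra. nra. }
  assert (HN : N <> 0) by (intro Z; rewrite Z in HNK; lra).
  assert (Haa : 0 < aa).
  { unfold aa. destruct (Req_dec a1 0), (Req_dec a2 0); try nra. subst. unfold K1, K2 in HK. nra. }
  assert (Huu : 0 < uu) by lra.
  assert (Hvv : 0 < vv) by lra.
  assert (Hlag1 : aa * uu = A1*A1 + K1*K1) by (unfold aa, uu, A1, K1; ring).
  assert (Hlag2 : aa * vv = A2*A2 + K2*K2) by (unfold aa, vv, A2, K2; ring).
  unfold P, Q, R, p, q, t, vcross, vdot, vsub; simpl.
  repeat split.
  - replace (A1 * K2 / N) with (A1 * (N*K2) / (N*N)) by (field; auto).
    apply Rdiv_lt_0_compat; nra.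
  - replace (A1 * K2 / N) with (A1 * (N*K2) / (N*N)) by (field; auto).
    apply Rmult_lt_reg_r with (N*N). nra. unfold Rdiv; rewrite Rmult_assoc, Rinv_l by (apply Rmult_integral_contrapositive; auto).
    assert (0 < K1 * N) by (unfold N; nra). assert (N*N = A1*K2*N + A2*K1*N) by (unfold N; ring). nra.
  - apply Rdiv_lt_0_compat; lra.
  - apply Rmult_lt_reg_r with vv; auto. unfold Rdiv; rewrite Rmult_assoc, Rinv_l; lra.
  - apply Rdiv_lt_0_compat; lra.
  - apply Rmult_lt_reg_r with uu; auto. unfold Rdiv; rewrite Rmult_assoc, Rinv_l; lra.
  - match goal with |- ?L < 0 => replace L with (A2*(K1*K1)*(K2*N)*(A1*A2-K1*K2)/(N*N*aa*uu)) end.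
    2:{ unfold N, A1, A2, K1, K2, aa, uu, vv in *. field. repeat split; first [exact HN | lra]. }
    apply div_neg. 2:{ assert (0 < N*N) by nra. apply Rmult_lt_0_compat; [nra|lra]. }
    assert (0 < K1*K1) by nra. assert (0 < A2*(K1*K1)*(K2*N)) by (apply Rmult_lt_0_compat; [apply Rmult_lt_0_compat|]; lra). nra.
  - unfold N, A1, A2, K1, K2, uu, vv in *. field. repeat split; first [exact HN | lra].
  - match goal with |- ?L < 0 => replace L with (-(A1*K2*K1*(K2*N)*(K1*K2-A1*A2))/(N*N*aa*vv)) end.
    2:{ unfold N, A1, A2, K1, K2, aa, uu, vv in *. field. repeat split; first [exact HN | lra]. }
    apply div_neg. 2:{ assert (0 < N*N) by nra. apply Rmult_lt_0_compat; [nra|lra]. }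
    assert (0 < K2*K1) by lra. assert (0 < A1*(K2*K1)*(K2*N)) by (apply Rmult_lt_0_compat; [apply Rmult_lt_0_compat|]; lra). nra.
  - unfold N, A1, A2, K1, K2, uu, vv in *. field. repeat split; first [exact HN | lra].
  - match goal with |- ?L < 0 => replace L with (-(A1*A2*(K1*K2))/(uu*vv)) end.
    2:{ unfold N, A1, A2, K1, K2, aa, uu, vv in *. field. repeat split; first [exact HN | lra]. }
    apply div_neg. 2:{ nra. }
    assert (0 < A1*A2*(K1*K2)) by (apply Rmult_lt_0_compat; [apply Rmult_lt_0_compat|]; lra). nra.
  - unfold N, A1, A2, K1, K2, uu, vv in *. field. repeat split; first [exact HN | lra].
Qed.


Lemma core_ex (x1 x2 a1 a2 u1 u2 v1 v2 : R) :
  0 < -(a1*u1+a2*u2) -> 0 < -(a1*v1+a2*v2) -> 0 < (u1*a2 - u2*a1)*(a1*v2 - a2*v1) ->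
  (-(a1*u1+a2*u2))*(-(a1*v1+a2*v2)) < (u1*a2 - u2*a1)*(a1*v2 - a2*v1) ->
  -(a1*u1+a2*u2) < u1*u1+u2*u2 -> -(a1*v1+a2*v2) < v1*v1+v2*v2 ->
  exists p q t, 0 < p < 1 /\ 0 < q < 1 /\ 0 < t < 1 /\
  vcross (vsub (x1 + a1 + q*v1, x2 + a2 + q*v2) (x1 + p*a1, x2 + p*a2)) (v1,v2) * vcross (vsub (x1 - u1 + t*u1, x2 - u2 + t*u2) (x1 + a1 + q*v1, x2 + a2 + q*v2)) (v1,v2) < 0 /\
  vdot (vsub (x1 + a1 + q*v1, x2 + a2 + q*v2) (x1 + p*a1, x2 + p*a2)) (v1,v2) * vcross (vsub (x1 - u1 + t*u1, x2 - u2 + t*u2) (x1 + a1 + q*v1, x2 + a2 + q*v2)) (v1,v2) + vdot (vsub (x1 - u1 + t*u1, x2 - u2 + t*u2) (x1 + a1 + q*v1, x2 + a2 + q*v2)) (v1,v2) * vcross (vsub (x1 + a1 + q*v1, x2 + a2 + q*v2) (x1 + p*a1, x2 + p*a2)) (v1,v2) = 0 /\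
  vcross (vsub (x1 - u1 + t*u1, x2 - u2 + t*u2) (x1 + a1 + q*v1, x2 + a2 + q*v2)) (u1,u2) * vcross (vsub (x1 + p*a1, x2 + p*a2) (x1 - u1 + t*u1, x2 - u2 + t*u2)) (u1,u2) < 0 /\
  vdot (vsub (x1 - u1 + t*u1, x2 - u2 + t*u2) (x1 + a1 + q*v1, x2 + a2 + q*v2)) (u1,u2) * vcross (vsub (x1 + p*a1, x2 + p*a2) (x1 - u1 + t*u1, x2 - u2 + t*u2)) (u1,u2) + vdot (vsub (x1 + p*a1, x2 + p*a2) (x1 - u1 + t*u1, x2 - u2 + t*u2)) (u1,u2) * vcross (vsub (x1 - u1 + t*u1, x2 - u2 + t*u2) (x1 + a1 + q*v1, x2 + a2 + q*v2)) (u1,u2) = 0 /\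
  vcross (vsub (x1 + p*a1, x2 + p*a2) (x1 - u1 + t*u1, x2 - u2 + t*u2)) (a1,a2) * vcross (vsub (x1 + a1 + q*v1, x2 + a2 + q*v2) (x1 + p*a1, x2 + p*a2)) (a1,a2) < 0 /\
  vdot (vsub (x1 + p*a1, x2 + p*a2) (x1 - u1 + t*u1, x2 - u2 + t*u2)) (a1,a2) * vcross (vsub (x1 + a1 + q*v1, x2 + a2 + q*v2) (x1 + p*a1, x2 + p*a2)) (a1,a2) + vdot (vsub (x1 + a1 + q*v1, x2 + a2 + q*v2) (x1 + p*a1, x2 + p*a2)) (a1,a2) * vcross (vsub (x1 + p*a1, x2 + p*a2) (x1 - u1 + t*u1, x2 - u2 + t*u2)) (a1,a2) = 0.
Proof.
  intros H1 H2 H3 H4 H5 H6.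
  pose proof (core_signs x1 x2 a1 a2 u1 u2 v1 v2 H1 H2 H3 H4 H5 H6) as C.
  cbv zeta in C. do 3 eexists. exact C.
Qed.

Lemma core_geo (X Y Z W : point) :
  let a := vsub Y X in let v := vsub Z Y in let u := vsub X W in
  0 < - vdot a u -> 0 < - vdot a v -> 0 < vcross u a * vcross a v ->
  vdot a u * vdot a v < vcross u a * vcross a v ->
  - vdot a u < vdot u u -> - vdot a v < vdot v v ->
  exists P Q R,
   (exists p, 0<p<1 /\ P = (fst X + p*(fst Y - fst X), snd X + p*(snd Y - snd X))) /\
   (exists q, 0<q<1 /\ Q = (fst Y + q*(fst Z - fst Y), snd Y + q*(snd Z - snd Y))) /\
   (exists t, 0<t<1 /\ R = (fst W + t*(fst X - fst W), snd W + t*(snd X - snd W))) /\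
   (exists l, 0<l /\ vsub R Q = vscale l (reflect v (vsub Q P))) /\
   (exists l, 0<l /\ vsub P R = vscale l (reflect u (vsub R Q))) /\
   (exists l, 0<l /\ vsub Q P = vscale l (reflect a (vsub P R))).
Proof.
  destruct X as [x1 x2], Y as [y1 y2], Z as [z1 z2], W as [w1 w2].
  intros a v u H1 H2 H3 H4 H5 H6.
  unfold a, u, v, vsub, vdot, vcross in *; simpl in *.
  destruct (core_ex x1 x2 (y1-x1) (y2-x2) (x1-w1) (x2-w2) (z1-y1) (z2-y2) H1 H2 H3 ltac:(nra) H5 H6)
    as (p & q & t & Hp & Hq & Ht & S1 & E1 & S2 & E2 & S3 & E3).
  exists (x1 + p*(y1-x1), x2 + p*(y2-x2)), (x1 + (y1-x1) + q*(z1-y1), x2 + (y2-x2) + q*(z2-y2)),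
    (x1 - (x1-w1) + t*(x1-w1), x2 - (x2-w2) + t*(x2-w2)).
  split; [|split; [|split; [|split; [|split]]]].
  - exists p; split; [exact Hp|]. reflexivity.
  - exists q; split; [exact Hq|]. f_equal; ring.
  - exists t; split; [exact Ht|]. f_equal; ring.
  - apply refl_lemma; assumption.
  - apply refl_lemma; assumption.
  - apply refl_lemma; assumption.
Qed.

Lemma rbound (r l S si : R) : 0 < r -> 0 < l -> r*S = l*si -> 3/4 < S*S -> S*S <= 1 ->
  1/4 < si*si < 3/4 -> l*l/4 < r*r < l*l.
Proof.
  intros Hr Hl E HS1 HS2 Hsi.
  assert (E2 : (r*r)*(S*S) = (l*l)*(si*si)) by (replace (r*r*(S*S)) with ((r*S)*(r*S)) by ring; rewrite E; ring).
  assert (0 < r*r) by nra. assert (0 < l*l) by nra.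
  split; nra.
Qed.

Lemma frame_dot (e v w : point) :
  vdot e e * vdot v w = vdot v e * vdot w e + vcross e v * vcross e w.
Proof. destruct e, v, w; unfold vdot, vcross; simpl; ring. Qed.
Lemma frame_cross (e v w : point) :
  vdot e e * vcross v w = vdot v e * vcross e w - vcross e v * vdot w e.
Proof. destruct e, v, w; unfold vdot, vcross; simpl; ring. Qed.

Lemma sq_gt (x : R) : 1/2 < x -> 1/4 < x*x.
Proof. intros; nra. Qed.
Lemma vf1 (r s c : R) : 0 < r -> 0 < s -> 4*c^2 < 1 -> 4*(r*s*c)^2 < r*r*(s*s).
Proof. intros. assert (0 < (r*s)^2) by (apply pow_lt; nra). replace (4*(r*s*c)^2) with ((r*s)^2*(4*c^2)) by ring.
  replace (r*r*(s*s)) with ((r*s)^2*1) by ring. apply Rmult_lt_compat_l; auto. Qed.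

Lemma frame_alg (e s0 s1 s2 s3 : point) (l r0 r1 r2 r3 co1 co2 co3 co4 si1 si2 si3 si4 sg : R) :
  0 < l -> 0 < r0 -> 0 < r1 -> 0 < r2 -> 0 < r3 -> (sg = 1 \/ sg = -1) ->
  vdot e e = l*l -> vdot s0 s0 = r0*r0 -> vdot s1 s1 = r1*r1 -> vdot s2 s2 = r2*r2 -> vdot s3 s3 = r3*r3 ->
  vdot s0 e = l*r0*co1 -> vcross e s0 = sg*l*r0*si1 ->
  vdot s1 e = l*r1*co2 -> vcross e s1 = -sg*l*r1*si2 ->
  vdot s2 e = -l*r2*co3 -> vcross e s2 = -sg*l*r2*si3 ->
  vdot s3 e = -l*r3*co4 -> vcross e s3 = sg*l*r3*si4 ->
  vdot s0 e + vdot s1 e = vdot e e -> vdot s2 e + vdot s3 e = - vdot e e ->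
  vcross e s0 + vcross e s1 = 0 -> vcross e s2 + vcross e s3 = 0 ->
  1/2 < co1 -> 1/2 < co2 -> 1/2 < co3 -> 1/2 < co4 ->
  co1*co1 < 3/4 -> co2*co2 < 3/4 -> co3*co3 < 3/4 -> co4*co4 < 3/4 ->
  co1*co1 + si1*si1 = 1 -> co2*co2 + si2*si2 = 1 -> co3*co3 + si3*si3 = 1 -> co4*co4 + si4*si4 = 1 ->
  0 < si1 -> 0 < si2 -> 0 < si3 -> 0 < si4 ->
  4*(co1*co4 - si1*si4)^2 < 1 -> 0 < si1*co4 + co1*si4 ->
  4*(co1*co2 - si1*si2)^2 < 1 -> 0 < si1*co2 + co1*si2 ->
  4*(co2*co3 - si2*si3)^2 < 1 -> 0 < si2*co3 + co2*si3 ->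
  4*(co3*co4 - si3*si4)^2 < 1 -> 0 < si3*co4 + co3*si4 ->
  (l*l/4 < vdot s0 s0 < l*l /\ l*l/4 < vdot s1 s1 < l*l /\
   l*l/4 < vdot s2 s2 < l*l /\ l*l/4 < vdot s3 s3 < l*l) /\
  (4*(vdot s3 s0)^2 < vdot s3 s3 * vdot s0 s0 /\ 4*(vdot s0 s1)^2 < vdot s0 s0 * vdot s1 s1 /\
   4*(vdot s1 s2)^2 < vdot s1 s1 * vdot s2 s2 /\ 4*(vdot s2 s3)^2 < vdot s2 s2 * vdot s3 s3) /\
  (0 < vcross s3 s0 * vcross s0 s1 /\ 0 < vcross s0 s1 * vcross s1 s2 /\
   0 < vcross s1 s2 * vcross s2 s3 /\ 0 < vcross s2 s3 * vcross s3 s0).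
Proof.
  intros Hl H0 H1 H2 H3 Hsg He E0 E1 E2 E3 D0 K0 D1 K1 D2 K2 D3 K3 S01 S23 X01 X23
    c1 c2 c3 c4 c1' c2' c3' c4' p1 p2 p3 p4 q1 q2 q3 q4 C14 S14 C12 S12 C23 S23' C34 S34.
  assert (Hll : 0 < l*l) by nra.
  assert (R01 : r0*co1 + r1*co2 = l).
  { rewrite D0, D1, He in S01. apply Rmult_eq_reg_l with l; [rewrite <- S01; ring|lra]. }
  assert (R23 : r2*co3 + r3*co4 = l).
  { rewrite D2, D3, He in S23. apply Rmult_eq_reg_l with l; [|lra]. replace (l*(r2*co3+r3*co4)) with (-(-l*r2*co3 + -l*r3*co4)) by ring. rewrite S23; ring. }
  assert (F30 := frame_dot e s3 s0). assert (F01 := frame_dot e s0 s1).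
  assert (F12 := frame_dot e s1 s2). assert (F23 := frame_dot e s2 s3).
  assert (G30 := frame_cross e s3 s0). assert (G01 := frame_cross e s0 s1).
  assert (G12 := frame_cross e s1 s2). assert (G23 := frame_cross e s2 s3).
  rewrite ?He, ?D0, ?D1, ?D2, ?D3, ?K0, ?K1, ?K2, ?K3 in F30.
  rewrite ?He, ?D0, ?D1, ?D2, ?D3, ?K0, ?K1, ?K2, ?K3 in F01.
  rewrite ?He, ?D0, ?D1, ?D2, ?D3, ?K0, ?K1, ?K2, ?K3 in F12.
  rewrite ?He, ?D0, ?D1, ?D2, ?D3, ?K0, ?K1, ?K2, ?K3 in F23.
  rewrite ?He, ?D0, ?D1, ?D2, ?D3, ?K0, ?K1, ?K2, ?K3 in G30.
  rewrite ?He, ?D0, ?D1, ?D2, ?D3, ?K0, ?K1, ?K2, ?K3 in G01.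
  rewrite ?He, ?D0, ?D1, ?D2, ?D3, ?K0, ?K1, ?K2, ?K3 in G12.
  rewrite ?He, ?D0, ?D1, ?D2, ?D3, ?K0, ?K1, ?K2, ?K3 in G23.
  assert (Rel01 : r0*si1 = r1*si2).
  { rewrite K0, K1 in X01. assert (Z : (sg*l)*(r0*si1 - r1*si2) = 0) by (rewrite <- X01; ring).
    apply Rmult_integral in Z. destruct Z as [Z|Z]; [|lra]. destruct Hsg; subst; lra. }
  assert (Rel23 : r3*si4 = r2*si3).
  { rewrite K2, K3 in X23. assert (Z : (sg*l)*(r3*si4 - r2*si3) = 0) by (rewrite <- X23; ring).
    apply Rmult_integral in Z. destruct Z as [Z|Z]; [|lra]. destruct Hsg; subst; lra. }
  assert (V30 : vdot s3 s0 = -(r3*r0*(co1*co4 - si1*si4))).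
  { apply Rmult_eq_reg_l with (l*l); [rewrite F30;  destruct Hsg; subst sg; ring | lra]. }
  assert (V01 : vdot s0 s1 = r0*r1*(co1*co2 - si1*si2)).
  { apply Rmult_eq_reg_l with (l*l); [rewrite F01; destruct Hsg; subst sg; ring | lra]. }
  assert (V12 : vdot s1 s2 = -(r1*r2*(co2*co3 - si2*si3))).
  { apply Rmult_eq_reg_l with (l*l); [rewrite F12; destruct Hsg; subst sg; ring | lra]. }
  assert (V23 : vdot s2 s3 = r2*r3*(co3*co4 - si3*si4)).
  { apply Rmult_eq_reg_l with (l*l); [rewrite F23; destruct Hsg; subst sg; ring | lra]. }
  assert (W30 : vcross s3 s0 = -sg*(r3*r0*(si1*co4 + co1*si4))).
  { apply Rmult_eq_reg_l with (l*l); [rewrite G30; destruct Hsg; subst sg; ring | lra]. }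
  assert (W01 : vcross s0 s1 = -sg*(r0*r1*(si1*co2 + co1*si2))).
  { apply Rmult_eq_reg_l with (l*l); [rewrite G01; destruct Hsg; subst sg; ring | lra]. }
  assert (W12 : vcross s1 s2 = -sg*(r1*r2*(si2*co3 + co2*si3))).
  { apply Rmult_eq_reg_l with (l*l); [rewrite G12; destruct Hsg; subst sg; ring | lra]. }
  assert (W23 : vcross s2 s3 = -sg*(r2*r3*(si3*co4 + co3*si4))).
  { apply Rmult_eq_reg_l with (l*l); [rewrite G23; destruct Hsg; subst sg; ring | lra]. }
  assert (Hsg2 : sg*sg = 1) by (destruct Hsg; subst; ring).
  assert (P30 : 0 < r3*r0*(si1*co4 + co1*si4)) by (repeat apply Rmult_lt_0_compat; lra).
  assert (P01 : 0 < r0*r1*(si1*co2 + co1*si2)) by (repeat apply Rmult_lt_0_compat; lra).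
  assert (P12 : 0 < r1*r2*(si2*co3 + co2*si3)) by (repeat apply Rmult_lt_0_compat; lra).
  assert (P23 : 0 < r2*r3*(si3*co4 + co3*si4)) by (repeat apply Rmult_lt_0_compat; lra).
  assert (Q12 : (si1*co2 + co1*si2)*(si1*co2 + co1*si2) + (co1*co2 - si1*si2)^2 = 1)
    by (replace 1 with ((co1*co1+si1*si1)*(co2*co2+si2*si2)) by (rewrite p1, p2; ring); ring).
  assert (Q34 : (si3*co4 + co3*si4)*(si3*co4 + co3*si4) + (co3*co4 - si3*si4)^2 = 1)
    by (replace 1 with ((co3*co3+si3*si3)*(co4*co4+si4*si4)) by (rewrite p3, p4; ring); ring).
  assert (B0 : l*l/4 < r0*r0 < l*l).
  { apply (rbound r0 l (si1*co2 + co1*si2) si2 H0 Hl).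
    - replace (r0*(si1*co2+co1*si2)) with ((r0*si1)*co2 + r0*co1*si2) by ring. rewrite Rel01, <- R01; ring.
    - pose proof (pow2_ge_0 (co1*co2 - si1*si2)); lra.
    - pose proof (pow2_ge_0 (co1*co2 - si1*si2)); lra.
    - pose proof (sq_gt co2 c2); lra. }
  assert (B1 : l*l/4 < r1*r1 < l*l).
  { apply (rbound r1 l (si1*co2 + co1*si2) si1 H1 Hl).
    - replace (r1*(si1*co2+co1*si2)) with (r1*si1*co2 + co1*(r1*si2)) by ring. rewrite <- Rel01, <- R01; ring.
    - pose proof (pow2_ge_0 (co1*co2 - si1*si2)); lra.
    - pose proof (pow2_ge_0 (co1*co2 - si1*si2)); lra.
    - pose proof (sq_gt co1 c1); lra. }
  assert (B2 : l*l/4 < r2*r2 < l*l).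
  { apply (rbound r2 l (si3*co4 + co3*si4) si4 H2 Hl).
    - replace (r2*(si3*co4+co3*si4)) with ((r2*si3)*co4 + r2*co3*si4) by ring. rewrite <- Rel23, <- R23; ring.
    - pose proof (pow2_ge_0 (co3*co4 - si3*si4)); lra.
    - pose proof (pow2_ge_0 (co3*co4 - si3*si4)); lra.
    - pose proof (sq_gt co4 c4); lra. }
  assert (B3 : l*l/4 < r3*r3 < l*l).
  { apply (rbound r3 l (si3*co4 + co3*si4) si3 H3 Hl).
    - replace (r3*(si3*co4+co3*si4)) with (r3*si3*co4 + co3*(r3*si4)) by ring. rewrite Rel23, <- R23; ring.
    - pose proof (pow2_ge_0 (co3*co4 - si3*si4)); lra.
    - pose proof (pow2_ge_0 (co3*co4 - si3*si4)); lra.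
    - pose proof (sq_gt co3 c3); lra. }
  rewrite E0, E1, E2, E3, V30, V01, V12, V23, W30, W01, W12, W23.
  split; [|split].
  - repeat split; lra.
  - repeat split.
    + rewrite <- Rsqr_pow2, <- Rsqr_neg, Rsqr_pow2. apply vf1; lra.
    + apply vf1; lra.
    + rewrite <- Rsqr_pow2, <- Rsqr_neg, Rsqr_pow2. apply vf1; lra.
    + apply vf1; lra.
  - repeat split; match goal with |- 0 < -sg * ?X * (-sg * ?Y) =>
      replace (-sg * X * (-sg * Y)) with ((sg*sg)*(X*Y)) by ring; rewrite Hsg2, Rmult_1_l;
      apply Rmult_lt_0_compat; assumption end.
Qed.


Lemma trig_small (x : R) : PI/6 < x < PI/3 ->
  1/2 < cos x /\ cos x * cos x < 3/4 /\ 0 < sin x /\ cos x * cos x + sin x * sin x = 1.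
Proof.
  intros [H1 H2]. pose proof PI_RGT_0.
  assert (c1 : cos (PI/3) < cos x) by (apply cos_decreasing_1; lra).
  assert (c2 : cos x < cos (PI/6)) by (apply cos_decreasing_1; lra).
  rewrite cos_PI3 in c1. rewrite cos_PI6 in c2.
  assert (s3 : sqrt 3 * sqrt 3 = 3) by (apply sqrt_sqrt; lra).
  assert (0 < sqrt 3) by (apply sqrt_lt_R0; lra).
  repeat split.
  - lra.
  - nra.
  - apply sin_gt_0; lra.
  - pose proof (sin2_cos2 x). unfold Rsqr in *. lra.
Qed.

Lemma trig_sum (y : R) : PI/3 < y < 2*PI/3 -> 4 * (cos y)^2 < 1 /\ 0 < sin y.
Proof.
  intros [H1 H2]. pose proof PI_RGT_0.
  assert (c1 : cos y < cos (PI/3)) by (apply cos_decreasing_1; lra).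
  assert (c2 : cos (PI - PI/3) < cos y) by (apply cos_decreasing_1; lra).
  rewrite Rtrigo_facts.cos_pi_minus in c2. rewrite cos_PI3 in c1, c2.
  split.
  - nra.
  - apply sin_gt_0; lra.
Qed.

Lemma acos_range (x : R) : 0 < acos x < PI -> -1 < x < 1.
Proof.
  unfold acos. destruct (Rle_dec x (-1)); [lra|]. destruct (Rle_dec 1 x); lra.
Qed.

Lemma ang_lemma (P Q S : point) : PI/6 < angle P Q S < PI/3 ->
  0 < vnorm (vsub P Q) /\ 0 < vnorm (vsub S Q) /\
  vdot (vsub P Q) (vsub S Q) = vnorm (vsub P Q) * vnorm (vsub S Q) * cos (angle P Q S) /\
  vcross (vsub P Q) (vsub S Q) * vcross (vsub P Q) (vsub S Q) =
    (vnorm (vsub P Q) * vnorm (vsub S Q) * sin (angle P Q S)) * (vnorm (vsub P Q) * vnorm (vsub S Q) * sin (angle P Q S)).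
Proof.
  unfold angle. set (u := vsub P Q). set (v := vsub S Q).
  set (x := vdot u v / (vnorm u * vnorm v)). intros Hr. pose proof PI_RGT_0.
  assert (Hx : -1 < x < 1) by (apply acos_range; lra).
  assert (Hc : cos (acos x) = x) by (apply cos_acos; lra).
  pose proof (sin2_cos2 (acos x)) as Hsc. unfold Rsqr in Hsc.
  assert (nu0 : 0 <= vnorm u) by apply sqrt_pos.
  assert (nv0 : 0 <= vnorm v) by apply sqrt_pos.
  assert (Hn : vnorm u * vnorm v <> 0).
  { intro Z. unfold x in Hr. rewrite Z, Rdiv_0_r, acos_0 in Hr. lra. }
  assert (nu : 0 < vnorm u) by (destruct nu0 as [|Z]; auto; rewrite <- Z in Hn; lra).
  assert (nv : 0 < vnorm v) by (destruct nv0 as [|Z]; auto; rewrite <- Z in Hn; lra).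
  assert (Hd : vdot u v = vnorm u * vnorm v * cos (acos x)) by (rewrite Hc; unfold x; field; split; lra).
  repeat split; auto.
  assert (uu : vnorm u * vnorm u = vdot u u) by (apply sqrt_sqrt; destruct u; unfold vdot; simpl; nra).
  assert (vv : vnorm v * vnorm v = vdot v v) by (apply sqrt_sqrt; destruct v; unfold vdot; simpl; nra).
  assert (Lag : vcross u v * vcross u v = vdot u u * vdot v v - vdot u v * vdot u v)
    by (destruct u, v; unfold vcross, vdot; simpl; ring).
  rewrite Lag, Hd, <- uu, <- vv.
  assert (Hs : sin (acos x) * sin (acos x) = 1 - cos (acos x) * cos (acos x)) by lra.
  match goal with |- _ = ?R => replace R with ((vnorm u * vnorm v)^2 * (sin (acos x) * sin (acos x))) by ring end.
  rewrite Hs. ring.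
Qed.

Lemma acute_dot (P Q S : point) : angle P Q S < PI/2 -> 0 < vdot (vsub P Q) (vsub S Q).
Proof.
  unfold angle. set (u := vsub P Q). set (v := vsub S Q).
  set (x := vdot u v / (vnorm u * vnorm v)). intros Hr. pose proof PI_RGT_0.
  assert (Hx : 0 < x).
  { destruct (Rle_dec x 0) as [Hle|]; [|lra]. exfalso.
    destruct (Rle_dec x (-1)) as [Hm|Hm].
    - unfold acos in Hr. destruct (Rle_dec x (-1)); [lra|contradiction].
    - assert (Hc : cos (acos x) = x) by (apply cos_acos; lra).
      pose proof (acos_bound x).
      assert (0 < cos (acos x)) by (apply cos_gt_0; lra). lra. }
  assert (nu0 : 0 <= vnorm u) by apply sqrt_pos.
  assert (nv0 : 0 <= vnorm v) by apply sqrt_pos.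
  assert (Hn : 0 < vnorm u * vnorm v).
  { destruct (Req_dec (vnorm u * vnorm v) 0) as [Z|Z].
    - unfold x in Hx. rewrite Z, Rdiv_0_r in Hx. lra.
    - nra. }
  assert (0 < vnorm u) by (destruct nu0 as [|Z]; auto; rewrite <- Z in Hn; lra).
  assert (0 < vnorm v) by (destruct nv0 as [|Z]; auto; rewrite <- Z in Hn; lra).
  replace (vdot u v) with (x * (vnorm u * vnorm v)) by (unfold x; field; repeat split; lra).
  nra.
Qed.


Lemma norm_sq (u : point) : vnorm u * vnorm u = vdot u u.
Proof. apply sqrt_sqrt. destruct u; unfold vdot; simpl; nra. Qed.

Lemma vnorm_sym (P Q : point) : vnorm (vsub P Q) = vnorm (vsub Q P).
Proof. unfold vnorm; f_equal. destruct P, Q; unfold vdot, vsub; simpl; ring. Qed.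

Lemma sign_sq (k m : R) : 0 < m -> k*k = m*m -> exists sg, (sg = 1 \/ sg = -1) /\ k = sg * m.
Proof.
  intros Hm E. assert (Z : (k - m)*(k + m) = 0) by (ring_simplify; lra).
  apply Rmult_integral in Z. destruct Z.
  - exists 1. split; [left; auto|lra].
  - exists (-1). split; [right; auto|lra].
Qed.

Lemma eq_sq_pos (x y : R) : 0 < x -> 0 < y -> x*x = y*y -> x = y.
Proof. intros. assert (Z : (x - y)*(x + y) = 0) by (ring_simplify; lra).
  apply Rmult_integral in Z. destruct Z; lra. Qed.

Ltac vring := match goal with |- ?L = ?R =>
  repeat match goal with P : point |- _ => destruct P end; unfold vdot, vcross, vsub; simpl; ring end.

Lemma global (A B C D : point) : diag_quadrilateral A B C D -> near_square (PI/12) A B C D ->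
  exists L,
  (L/4 < vdot (vsub B A) (vsub B A) < L /\ L/4 < vdot (vsub C B) (vsub C B) < L /\
   L/4 < vdot (vsub D C) (vsub D C) < L /\ L/4 < vdot (vsub A D) (vsub A D) < L) /\
  (4*(vdot (vsub A D) (vsub B A))^2 < vdot (vsub A D) (vsub A D) * vdot (vsub B A) (vsub B A) /\
   4*(vdot (vsub B A) (vsub C B))^2 < vdot (vsub B A) (vsub B A) * vdot (vsub C B) (vsub C B) /\
   4*(vdot (vsub C B) (vsub D C))^2 < vdot (vsub C B) (vsub C B) * vdot (vsub D C) (vsub D C) /\
   4*(vdot (vsub D C) (vsub A D))^2 < vdot (vsub D C) (vsub D C) * vdot (vsub A D) (vsub A D)) /\
  (0 < vcross (vsub A D) (vsub B A) * vcross (vsub B A) (vsub C B) /\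
   0 < vcross (vsub B A) (vsub C B) * vcross (vsub C B) (vsub D C) /\
   0 < vcross (vsub C B) (vsub D C) * vcross (vsub D C) (vsub A D) /\
   0 < vcross (vsub D C) (vsub A D) * vcross (vsub A D) (vsub B A)).
Proof.
  intros Hdiag (N1 & N2 & N3 & N4).
  unfold a1, a2, a3, a4 in *.
  apply Rabs_def2 in N1, N2, N3, N4.
  assert (R1 : PI/6 < angle B A C < PI/3) by lra.
  assert (R2 : PI/6 < angle A C B < PI/3) by lra.
  assert (R3 : PI/6 < angle A C D < PI/3) by lra.
  assert (R4 : PI/6 < angle C A D < PI/3) by lra.
  destruct (trig_small _ R1) as (c1 & c1' & p1 & q1).
  destruct (trig_small _ R2) as (c2 & c2' & p2 & q2).
  destruct (trig_small _ R3) as (c3 & c3' & p3 & q3).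
  destruct (trig_small _ R4) as (c4 & c4' & p4 & q4).
  destruct (trig_sum (angle B A C + angle C A D) ltac:(lra)) as (C14 & S14).
  destruct (trig_sum (angle B A C + angle A C B) ltac:(lra)) as (C12 & S12).
  destruct (trig_sum (angle A C B + angle A C D) ltac:(lra)) as (C23 & S23).
  destruct (trig_sum (angle A C D + angle C A D) ltac:(lra)) as (C34 & S34).
  rewrite cos_plus in C14, C12, C23, C34. rewrite sin_plus in S14, S12, S23, S34.
  destruct (ang_lemma _ _ _ R1) as (G1a & G1b & G1d & G1c).
  destruct (ang_lemma _ _ _ R2) as (G2a & G2b & G2d & G2c).
  destruct (ang_lemma _ _ _ R3) as (G3a & G3b & G3d & G3c).
  destruct (ang_lemma _ _ _ R4) as (G4a & G4b & G4d & G4c).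
  rewrite (vnorm_sym A C) in G2a, G2d, G2c, G3a, G3d, G3c.
  rewrite (vnorm_sym D A) in G4b, G4d, G4c.
  assert (I1 : vcross (vsub B A) (vsub C A) = - vcross (vsub C A) (vsub B A)) by vring.
  assert (I2 : vcross (vsub A C) (vsub B C) = - vcross (vsub C A) (vsub B A)) by vring.
  assert (I3 : vcross (vsub A C) (vsub D C) = - vcross (vsub C A) (vsub D A)) by vring.
  rewrite I1 in G1c. rewrite I2 in G2c. rewrite I3 in G3c.
  set (l := vnorm (vsub C A)) in *.
  set (r0 := vnorm (vsub B A)) in *.
  set (r1 := vnorm (vsub B C)) in *.
  set (r2 := vnorm (vsub D C)) in *.
  set (r3 := vnorm (vsub A D)) in *.
  set (k0 := vcross (vsub C A) (vsub B A)) in *.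
  set (kD := vcross (vsub C A) (vsub D A)) in *.
  set (co1 := cos (angle B A C)) in *. set (co2 := cos (angle A C B)) in *.
  set (co3 := cos (angle A C D)) in *. set (co4 := cos (angle C A D)) in *.
  set (si1 := sin (angle B A C)) in *. set (si2 := sin (angle A C B)) in *.
  set (si3 := sin (angle A C D)) in *. set (si4 := sin (angle C A D)) in *.
  assert (Pm1 : 0 < r0*l*si1) by (repeat apply Rmult_lt_0_compat; lra).
  assert (Pm2 : 0 < l*r1*si2) by (repeat apply Rmult_lt_0_compat; lra).
  assert (Pm3 : 0 < l*r2*si3) by (repeat apply Rmult_lt_0_compat; lra).
  assert (Pm4 : 0 < l*r3*si4) by (repeat apply Rmult_lt_0_compat; lra).
  assert (E12 : l*r1*si2 = r0*l*si1).
  { apply eq_sq_pos; auto. rewrite <- G1c, <- G2c. ring. }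
  assert (E34 : l*r2*si3 = l*r3*si4).
  { apply eq_sq_pos; auto. rewrite <- G3c, <- G4c. ring. }
  destruct (sign_sq k0 (r0*l*si1) Pm1 ltac:(rewrite <- G1c; ring)) as (sg & Hsg & Hk0).
  assert (HkD : kD = -sg*(l*r3*si4)).
  { destruct (sign_sq kD (l*r3*si4) Pm4 ltac:(rewrite <- G4c; ring)) as (sg' & Hsg' & HkD).
    unfold diag_quadrilateral in Hdiag. fold k0 kD in Hdiag. rewrite Hk0, HkD in Hdiag.
    destruct Hsg as [->| ->], Hsg' as [->| ->]; rewrite HkD; try ring; nra. }
  exists (l*l).
  apply (frame_alg (vsub C A) (vsub B A) (vsub C B) (vsub D C) (vsub A D) l r0 r1 r2 r3
           co1 co2 co3 co4 si1 si2 si3 si4 sg); auto.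
  - unfold l; symmetry; apply norm_sq.
  - unfold r0; symmetry; apply norm_sq.
  - unfold r1. rewrite norm_sq. vring.
  - unfold r2; symmetry; apply norm_sq.
  - unfold r3; symmetry; apply norm_sq.
  - replace (vdot (vsub B A) (vsub C A)) with (vdot (vsub B A) (vsub C A)) by reflexivity.
    rewrite G1d. ring.
  - unfold k0 in Hk0. rewrite Hk0. ring.
  - replace (vdot (vsub C B) (vsub C A)) with (vdot (vsub A C) (vsub B C)) by vring.
    rewrite G2d. ring.
  - replace (vcross (vsub C A) (vsub C B)) with (- vcross (vsub C A) (vsub B A)) by vring.
    fold k0. rewrite Hk0, <- E12. ring.
  - replace (vdot (vsub D C) (vsub C A)) with (- vdot (vsub A C) (vsub D C)) by vring.
    rewrite G3d. ring.
  - replace (vcross (vsub C A) (vsub D C)) with (vcross (vsub C A) (vsub D A)) by vring.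
    fold kD. rewrite HkD, <- E34. ring.
  - replace (vdot (vsub A D) (vsub C A)) with (- vdot (vsub C A) (vsub D A)) by vring.
    rewrite G4d. ring.
  - replace (vcross (vsub C A) (vsub A D)) with (- vcross (vsub C A) (vsub D A)) by vring.
    fold kD. rewrite HkD. ring.
  - vring.
  - vring.
  - vring.
  - vring.
Qed.


Lemma mod3_plus3 (j : nat) : ((j + 3) mod 3 = j mod 3)%nat.
Proof. replace (j+3)%nat with (j + 1*3)%nat by lia. apply Nat.Div0.mod_add. Qed.

Lemma mod3_cases (j : nat) :
  ((j mod 3 = 0 /\ (S j) mod 3 = 1 /\ (S (S j)) mod 3 = 2) \/
   (j mod 3 = 1 /\ (S j) mod 3 = 2 /\ (S (S j)) mod 3 = 0) \/
   (j mod 3 = 2 /\ (S j) mod 3 = 0 /\ (S (S j)) mod 3 = 1))%nat.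
Proof.
  induction j as [|j IH].
  - left; simpl; auto.
  - replace (S (S (S j))) with (j + 3)%nat by lia. rewrite mod3_plus3.
    destruct IH as [(H1 & H2 & H3)|[(H1 & H2 & H3)|(H1 & H2 & H3)]];
      rewrite H1, H2, H3; auto.
Qed.

Lemma assemble (A B C D P Q R : point) (i0 i1 i3 : nat) :
  (i0 < 4)%nat -> (i1 < 4)%nat -> (i3 < 4)%nat -> i0 <> i1 -> i1 <> i3 -> i3 <> i0 ->
  on_open_side A B C D i0 P -> on_open_side A B C D i1 Q -> on_open_side A B C D i3 R ->
  (exists l, 0 < l /\ vsub R Q = vscale l (reflect (vsub (vert A B C D (i1+1)) (vert A B C D i1)) (vsub Q P))) ->
  (exists l, 0 < l /\ vsub P R = vscale l (reflect (vsub (vert A B C D (i3+1)) (vert A B C D i3)) (vsub R Q))) ->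
  (exists l, 0 < l /\ vsub Q P = vscale l (reflect (vsub (vert A B C D (i0+1)) (vert A B C D i0)) (vsub P R))) ->
  periodic_billiard_path A B C D.
Proof.
  intros h0 h1 h3 d01 d13 d30 oP oQ oR rQ rR rP.
  exists 3%nat, (fun j => match (j mod 3)%nat with 0%nat => P | 1%nat => Q | _ => R end),
    (fun j => match (j mod 3)%nat with 0%nat => i0 | 1%nat => i1 | _ => i3 end).
  split; [lia|]. split; [|split; [|split]].
  - intro j. rewrite mod3_plus3. auto.
  - intro j. destruct (mod3_cases j) as [(H1 & H2 & H3)|[(H1 & H2 & H3)|(H1 & H2 & H3)]];
      rewrite H1; auto.
  - intro j. destruct (mod3_cases j) as [(H1 & H2 & H3)|[(H1 & H2 & H3)|(H1 & H2 & H3)]];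
      rewrite H1, H2; auto.
  - intro j. destruct (mod3_cases j) as [(H1 & H2 & H3)|[(H1 & H2 & H3)|(H1 & H2 & H3)]];
      rewrite H1, H2, H3; auto.
Qed.


Lemma prod_lt (x y p q : R) : 0 < x -> 0 < y -> 3*(x*x) < p*p -> 3*(y*y) < q*q -> 0 < p*q -> x*y < p*q.
Proof.
  intros. assert (x*x*(y*y) < p*p*(q*q)) by nra.
  destruct (Rlt_le_dec (x*y) (p*q)); auto.
  assert (0 < x*y) by nra. nra.
Qed.

Lemma h5 (A uu aa : R) : 0 < A -> 0 < uu -> 4*(A*A) < uu*aa -> aa < 4*uu -> A < uu.
Proof. intros. destruct (Rlt_le_dec A uu); auto. nra. Qed.

Lemma quad_case (X Y Z W : point) (L : R) :
  0 < vdot (vsub W X) (vsub Y X) -> 0 < vdot (vsub X Y) (vsub Z Y) ->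
  4*(vdot (vsub X W) (vsub Y X))^2 < vdot (vsub X W) (vsub X W) * vdot (vsub Y X) (vsub Y X) ->
  4*(vdot (vsub Y X) (vsub Z Y))^2 < vdot (vsub Y X) (vsub Y X) * vdot (vsub Z Y) (vsub Z Y) ->
  0 < vcross (vsub X W) (vsub Y X) * vcross (vsub Y X) (vsub Z Y) ->
  L/4 < vdot (vsub X W) (vsub X W) < L -> L/4 < vdot (vsub Y X) (vsub Y X) < L ->
  L/4 < vdot (vsub Z Y) (vsub Z Y) < L ->
  exists P Q R,
   (exists p, 0<p<1 /\ P = (fst X + p*(fst Y - fst X), snd X + p*(snd Y - snd X))) /\
   (exists q, 0<q<1 /\ Q = (fst Y + q*(fst Z - fst Y), snd Y + q*(snd Z - snd Y))) /\
   (exists t, 0<t<1 /\ R = (fst W + t*(fst X - fst W), snd W + t*(snd X - snd W))) /\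
   (exists l, 0<l /\ vsub R Q = vscale l (reflect (vsub Z Y) (vsub Q P))) /\
   (exists l, 0<l /\ vsub P R = vscale l (reflect (vsub X W) (vsub R Q))) /\
   (exists l, 0<l /\ vsub Q P = vscale l (reflect (vsub Y X) (vsub P R))).
Proof.
  intros HX HY V1 V2 K Lu La Lv.
  set (u := vsub X W) in *. set (a := vsub Y X) in *. set (v := vsub Z Y) in *.
  assert (E1 : vdot (vsub W X) a = - vdot a u) by (unfold a, u; vring).
  assert (E2 : vdot (vsub X Y) v = - vdot a v) by (unfold a, v; vring).
  assert (S1 : vdot u a = vdot a u) by (unfold a, u; vring).
  rewrite E1 in HX. rewrite E2 in HY. rewrite S1 in V1.
  assert (Lg1 : vdot u u * vdot a a = vdot a u * vdot a u + vcross u a * vcross u a)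
    by (unfold a, u; vring).
  assert (Lg2 : vdot a a * vdot v v = vdot a v * vdot a v + vcross a v * vcross a v)
    by (unfold a, v; vring).
  apply core_geo; fold u a v.
  - exact HX.
  - exact HY.
  - exact K.
  - replace (vdot a u * vdot a v) with ((- vdot a u) * (- vdot a v)) by ring.
    apply prod_lt; [exact HX | exact HY | | | exact K].
    + rewrite <- Rsqr_pow2 in V1; unfold Rsqr in V1. nra.
    + rewrite <- Rsqr_pow2 in V2; unfold Rsqr in V2. nra.
  - apply (h5 _ _ (vdot a a)); lra.
  - apply (h5 _ _ (vdot a a)); lra.
Qed.


Theorem proposition3p2p1 (A B C D : point) :
  diag_quadrilateral A B C D ->
  near_square (PI / 12) A B C D ->
  two_adjacent_acute A B C D ->
  periodic_billiard_path A B C D.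
Proof.
  intros Hd Hn (i & Hi & Hac1 & Hac2).
  destruct (global A B C D Hd Hn) as (L & (L0 & L1 & L2 & L3) & (V0 & V1 & V2 & V3) & (K0 & K1 & K2 & K3)).
  unfold interior_angle, vert in Hac1, Hac2.
  destruct i as [|[|[|[|i]]]]; [ | | | | lia]; simpl in Hac1, Hac2;
    apply acute_dot in Hac1; apply acute_dot in Hac2.
  - destruct (quad_case A B C D L Hac1 Hac2 V0 V1 K0 L3 L0 L1)
      as (P & Q & R & (p & Hp & EP) & (q & Hq & EQ) & (t & Ht & ER) & r1 & r2 & r3).
    apply (assemble A B C D P Q R 0 1 3); try lia;
      try (unfold on_open_side, vert; simpl; eauto); exact I.
  - destruct (quad_case B C D A L Hac1 Hac2 V1 V2 K1 L0 L1 L2)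
      as (P & Q & R & (p & Hp & EP) & (q & Hq & EQ) & (t & Ht & ER) & r1 & r2 & r3).
    apply (assemble A B C D P Q R 1 2 0); try lia;
      try (unfold on_open_side, vert; simpl; eauto); exact I.
  - destruct (quad_case C D A B L Hac1 Hac2 V2 V3 K2 L1 L2 L3)
      as (P & Q & R & (p & Hp & EP) & (q & Hq & EQ) & (t & Ht & ER) & r1 & r2 & r3).
    apply (assemble A B C D P Q R 2 3 1); try lia;
      try (unfold on_open_side, vert; simpl; eauto); exact I.
  - destruct (quad_case D A B C L Hac1 Hac2 V3 V0 K3 L2 L3 L0)
      as (P & Q & R & (p & Hp & EP) & (q & Hq & EQ) & (t & Ht & ER) & r1 & r2 & r3).
    apply (assemble A B C D P Q R 3 0 2); try lia;
      try (unfold on_open_side, vert; simpl; eauto); exact I.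
Qed.
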